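(* Suppose $f(\cdot;0,1)$ satisfies Condition C3 and that for every $\mu\in\mathbb{R}$, $$\int_{\mathbb{R}}\{\log f(x;\mu,1)\}\,f(x;0,1)\,dx>-\infty.$$ Then for every $\Psi_0\in\boldsymbol{\Psi}_m$ and every $\sigma_0>0$, $\int_{\mathbb{R}}|\log g(x;\Psi_0,\sigma_0)|\,g(x;\Psi_0,\sigma_0)\,dx<\infty$ (i.e. Condition C2 holds).
   Context: Fix a positive integer $m$. Let $f(x;0,1)$ be a probability density on $\mathbb{R}$, $f(x;\mu,\sigma)=\sigma^{-1}f((x-\mu)/\sigma;0,1)$, $\boldsymbol{\Psi}_m=\{\sum_{j=1}^m\alpha_j I(\mu_j\le\mu):\alpha_j\ge0,\sum_j\alpha_j=1,\mu_j\in\mathbb{R}\}$, $g(x;\Psi,\sigma)=\sum_{j=1}^m\alpha_j f(x;\mu_j,\sigma)$. (C3) There exist $v_0,v_1>0$ and $\beta>1$ such that $f(x;0,1)\le\min\{v_0,v_1|x|^{-\beta}\}$ for all $x$. *)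

(* Defs.v *)
From mathcomp Require Import all_boot all_order all_algebra.
From mathcomp Require Import all_classical all_reals all_analysis.
Set Implicit Arguments. Unset Strict Implicit. Unset Printing Implicit Defensive.
Import Order.TTheory GRing.Theory Num.Theory.
Local Open Scope ring_scope.
Local Open Scope ereal_scope.

Definition elog {R : realType} (x : R) : \bar R :=
  if (0 < x)%R then (ln x)%:E else -oo.

Definition fls {R : realType} (f : R -> R) (mu sigma : R) (x : R) : R :=
  (sigma^-1 * f ((x - mu) / sigma))%R.

(* finite mixture g(x; Psi, sigma) = sum_j alpha_j f(x; mu_j, sigma),
   the mixing distribution Psi = sum_j alpha_j I(mu_j <= .) being given by
   its weights alpha and support points mu *)
Definition gmix {R : realType} (m : nat) (f : R -> R)
  (alpha mu : 'I_m -> R) (sigma : R) (x : R) : R :=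
  (\sum_(j < m) alpha j * fls f (mu j) sigma x)%R.

Definition in_Psi {R : realType} (m : nat) (alpha mu : 'I_m -> R) : Prop :=
  (forall j, 0 <= alpha j)%R /\ (\sum_(j < m) alpha j = 1)%R.

Definition is_density {R : realType} (f : R -> R) : Prop :=
  measurable_fun [set: R] f /\ (forall x, 0 <= f x)%R /\
  \int[lebesgue_measure]_x (f x)%:E = 1.

(* Condition (C3): f <= min(v0, v1 |x|^-beta); at x = 0 the second bound is +oo,
   so it is only imposed for x <> 0 (powR 0 (-beta) = 0 in mathcomp). *)
Definition C3 {R : realType} (f : R -> R) : Prop :=
  exists v0 v1 beta : R, (0 < v0)%R /\ (0 < v1)%R /\ (1 < beta)%R /\
    forall x, (f x <= v0)%R /\ (x != 0%R -> (f x <= v1 * powR `|x| (- beta))%R).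

(* Main.v *)
Require Import Defs.
From HB Require Import structures.
From mathcomp Require Import all_boot all_order all_algebra.
From mathcomp Require Import all_classical all_reals all_analysis.
From mathcomp Require Import measurable_realfun ring lra.
Import Order.TTheory GRing.Theory Num.Theory.
Local Open Scope ring_scope.
Section Aff.
Local Open Scope ereal_scope.
Context {R : realType}.
Notation mu := (@lebesgue_measure R).

Lemma aff_int (s c : R) (h : R -> \bar R) : (0 < s)%R -> measurable_fun [set: R] h ->
  (forall x, 0 <= h x) ->
  \int[mu]_x h ((x - c) / s)%R = s%:E * \int[mu]_x h x.
Proof.
move=> s0 mh h0.
pose phi : measurableTypeR R -> measurableTypeR R := fun x : R => ((x - c) / s)%R.
have mphi : measurable_fun setT phi.
  by apply: measurable_funM => //; apply: measurable_funD.
have si : (0 <= s^-1)%R by rewrite invr_ge0 ltW.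
pose P := measure_function_pushforward__canonical__measure_function_Measure mu mphi.
pose nu := mscale (NngNum si) P.
have Enu : forall A, measurable A -> mu A = nu A.
  apply: lebesgue_measure_unique => _ [[a b] _ <-].
  rewrite /nu /mscale /pushforward /=.
  have E : (phi @^-1` `]a, b])%classic = `](s * a + c)%R, (s * b + c)%R]%classic.
    apply/seteqP; split => x /=; rewrite !in_itv /= /phi.
      by rewrite ltr_pdivlMr // lter_pdivrMr // => /andP[h1 h2]; apply/andP; split; lra.
    by move=> /andP[h1 h2]; rewrite ltr_pdivlMr // ler_pdivrMr //; apply/andP; split; lra.
  rewrite /mscale /P /= /pushforward E !lebesgue_measure_itv /= !lte_fin.
  have [ab|ba] := ltP a b.
    rewrite ifT; last by rewrite ltrD2r ltr_pM2l.
    rewrite -!EFinB -EFinM; congr (_%:E); field; lra.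
  rewrite ifF ?mule0 //; apply/negbTE; rewrite -leNgt lerD2r ler_pM2l //.
have HP : \int[P]_x h x = \int[mu]_x h (phi x).
  rewrite (@ge0_integral_pushforward _ _ _ _ R phi mphi mu setT h) //.
rewrite [in RHS](eq_measure_integral nu); last by move=> A mA _; exact: Enu.
rewrite ge0_integral_mscale //.
rewrite HP /= muleA -EFinM mulfV ?gt_eqF // mul1e.
by [].
Qed.
End Aff.
Section PW.
Local Open Scope ring_scope.
Context {R : realType}.

Lemma pw m (al fk : 'I_m -> R) (V : R) :
  (forall k, 0 <= al k) -> \sum_(k < m) al k = 1 -> (forall k, 0 <= fk k) ->
  (forall k, fk k <= V) ->
  `|ln (\sum_(k < m) al k * fk k)| * (\sum_(k < m) al k * fk k) <=
  \sum_(k < m) al k * (fk k * (Num.max 0 (ln V) + Num.max 0 (- ln (al k))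
                                + Num.max 0 (- ln (fk k)))).
Proof.
move=> a0 a1 f0 fV.
set G := \sum_(k < m) al k * fk k.
set c := Num.max 0 (ln V).
have c0 : 0 <= c by rewrite le_max lexx.
have cV : ln V <= c by rewrite le_max lexx orbT.
have L0 : forall t : R, 0 <= Num.max 0 (- ln t) by move=> t; rewrite le_max lexx.
have Lt : forall t : R, - ln t <= Num.max 0 (- ln t) by move=> t; rewrite le_max lexx orbT.
have termge0 : forall k, 0 <= al k * (fk k * (c + Num.max 0 (- ln (al k))
                                + Num.max 0 (- ln (fk k)))).
  move=> k; apply: mulr_ge0 => //; apply: mulr_ge0 => //.
  by apply: addr_ge0; [apply: addr_ge0|].
have G0 : 0 <= G by apply: sumr_ge0 => k _; apply: mulr_ge0.
have GV : G <= V.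
  apply: (@le_trans _ _ (\sum_(k < m) al k * V)).
    by apply: ler_sum => k _; apply: ler_wpM2l.
  by rewrite -mulr_suml a1 mul1r.
have [->|Gne] := eqVneq G 0.
  by rewrite mulr0; apply: sumr_ge0 => k _; exact: termge0.
have Gp : 0 < G by rewrite lt_def Gne G0.
have Vp : 0 < V by apply: lt_le_trans GV.
have lGV : ln G <= ln V by rewrite ler_ln // posrE.
have step1 : `|ln G| <= c + Num.max 0 (- ln G).
  have := Lt G; have := L0 G; rewrite ler_norml => h1 h2; apply/andP; split; lra.
apply: (@le_trans _ _ ((c + Num.max 0 (- ln G)) * G)).
  by apply: ler_wpM2r.
rewrite /G mulr_sumr; apply: ler_sum => k _.
have [af0|afne] := eqVneq (al k * fk k) 0.
  by rewrite af0 mulr0; apply: termge0.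
have afp : 0 < al k * fk k by rewrite lt_def afne mulr_ge0.
have ap : 0 < al k.
  rewrite lt_def a0 andbT; apply: contraNneq afne => ->; by rewrite mul0r.
have fp : 0 < fk k.
  rewrite lt_def f0 andbT; apply: contraNneq afne => ->; by rewrite mulr0.
have afG : al k * fk k <= G.
  rewrite /G (bigD1 k) //= lerDl; apply: sumr_ge0 => j _; exact: mulr_ge0.
have lnafG : ln (al k * fk k) <= ln G by rewrite ler_ln // posrE.
have lnM' : ln (al k * fk k) = ln (al k) + ln (fk k) by rewrite lnM // posrE.
have LG : Num.max 0 (- ln G) <= Num.max 0 (- ln (al k)) + Num.max 0 (- ln (fk k)).
  rewrite ge_max; apply/andP; split.
    by apply: addr_ge0.
  have := Lt (al k); have := Lt (fk k); lra.
have := ler_wpM2l (ltW afp) LG.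
have e1 : (c + Num.max 0 (- ln G)) * (al k * fk k) = c * (al k * fk k) + (al k * fk k) * Num.max 0 (- ln G) by ring.
have e2 : al k * (fk k * (c + Num.max 0 (- ln (al k)) + Num.max 0 (- ln (fk k)))) = c * (al k * fk k) + (al k * fk k) * (Num.max 0 (- ln (al k)) + Num.max 0 (- ln (fk k))) by ring.
rewrite e1 e2; lra.
Qed.
End PW.

Definition Lp {R : realType} (t : R) : R := Num.max 0%R (- ln t)%R.

Lemma Hbound {R : realType} (s t K : R) : 0 < s -> 0 <= t -> 0 <= K ->
  s^-1 * t * (K + Lp (s^-1 * t)) <= s^-1 * (t * Lp t) + s^-1 * (K + Num.max 0 (ln s)) * t.
Proof.
move=> s0 t0 K0.
have si : 0 < s^-1 by rewrite invr_gt0.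
have [->|tne] := eqVneq t 0.
  by rewrite !(mulr0, mul0r, add0r).
have tp : 0 < t by rewrite lt_def tne t0.
have e0 : 0 <= Num.max 0 (ln s) by rewrite le_max lexx.
have es : ln s <= Num.max 0 (ln s) by rewrite le_max lexx orbT.
have L0 : 0 <= Lp t by rewrite /Lp le_max lexx.
have Lt : - ln t <= Lp t by rewrite /Lp le_max lexx orbT.
have E : ln (s^-1 * t) = - ln s + ln t by rewrite lnM ?posrE // lnV ?posrE.
have LL : Lp (s^-1 * t) <= Num.max 0 (ln s) + Lp t.
  rewrite /Lp ge_max E; apply/andP; split; [exact: addr_ge0|].
  rewrite -/(Lp t); lra.
have st : 0 <= s^-1 * t by rewrite mulr_ge0 // ltW.
have h2 : K + Lp (s^-1 * t) <= K + (Num.max 0 (ln s) + Lp t) by rewrite lerD2l.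
have h := ler_wpM2l st h2.
apply: (le_trans h); rewrite le_eqVlt; apply/orP; left; apply/eqP; ring.
Qed.

Local Open Scope ereal_scope.

Theorem proposition1 (R : realType) (m : nat) (f : R -> R) :
  (0 < m)%N ->
  is_density f ->
  C3 f ->
  (forall mu : R,
     -oo < \int[lebesgue_measure]_x (elog (fls f mu 1 x) * (f x)%:E)) ->
  forall (alpha mu : 'I_m -> R) (sigma0 : R),
    in_Psi alpha mu -> (0 < sigma0)%R ->
    \int[lebesgue_measure]_x
       (`| elog (gmix f alpha mu sigma0 x) | * (gmix f alpha mu sigma0 x)%:E)
      < +oo.
Proof.
move=> m0 [mf [f0 f1]] [v0 [v1 [beta [v0p [v1p [b1 fb]]]]]] Hlog alpha mu sigma0 [a0 a1] s0.
have fv : forall x, (f x <= v0)%R by move=> x; case: (fb x).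
have mL : measurable_fun setT (@Lp R).
  by apply: measurable_maxr => //; apply: measurable_funN.
have Lp0 : forall t : R, (0 <= Lp t)%R by move=> t; rewrite /Lp le_max lexx.
have FL : \int[lebesgue_measure]_x (f x * Lp (f x))%:E < +oo.
  have E : forall x, (fun x => elog (fls f 0 1 x) * (f x)%:E)^\- x = (f x * Lp (f x))%:E.
    move=> x; rewrite funenegE /fls /elog subr0 invr1 mul1r mulr1.
    have [fp|fn] := ltP 0%R (f x).
      rewrite -EFinM -EFinN -EFin_max /Lp; congr (_%:E).
      have e : (- (ln (f x) * f x) = f x * - ln (f x))%R by ring.
      rewrite e; have [h|h] := leP 0%R (- ln (f x))%R.
        rewrite max_l //; exact: mulr_ge0 (ltW fp) h.
      rewrite mulr0 max_r //.
      exact: mulr_ge0_le0 (ltW fp) (ltW h).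
    have fx0 : f x = 0%R by apply: le_anti; rewrite fn f0.
    by rewrite fx0 mule0 oppe0 mul0r maxxx.
  rewrite ltNge leye_eq; apply/negP => /eqP hinf.
  have := Hlog 0%R; rewrite integralE.
  under [X in _ - X]eq_integral do rewrite E.
  by rewrite hinf /= addeNy ltxx.
have mfk : forall k, measurable_fun setT (fls f (mu k) sigma0).
  move=> k; apply: measurable_funM => //.
  apply: measurableT_comp => //.
  by apply: measurable_funM => //; apply: measurable_funD.
have fk0 : forall k x, (0 <= fls f (mu k) sigma0 x)%R.
  by move=> k x; rewrite /fls mulr_ge0 // invr_ge0 ltW.
pose V := (sigma0^-1 * v0)%R.
have fkV : forall k x, (fls f (mu k) sigma0 x <= V)%R.
  by move=> k x; rewrite /fls /V ler_wpM2l // invr_ge0 ltW.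
pose c := Num.max 0%R (ln V).
pose d k := Num.max 0%R (- ln (alpha k))%R.
have c0 : (0 <= c)%R by rewrite le_max lexx.
have d0 : forall k, (0 <= d k)%R by move=> k; rewrite le_max lexx.
pose B k x := (fls f (mu k) sigma0 x * (c + d k + Lp (fls f (mu k) sigma0 x)))%R.
have mB : forall k, measurable_fun setT (B k).
  move=> k; apply: measurable_funM => //; apply: measurable_funD => //.
  exact: measurableT_comp.
have B0 : forall k x, (0 <= B k x)%R.
  move=> k x; apply: mulr_ge0 => //; apply: addr_ge0 => //; exact: addr_ge0.
have IB : forall k, \int[lebesgue_measure]_x (B k x)%:E < +oo.
  move=> k.
  pose K := (c + d k)%R.
  have K0 : (0 <= K)%R by apply: addr_ge0.
  have si : (0 <= sigma0^-1)%R by rewrite invr_ge0 ltW.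
  pose H y := (sigma0^-1 * f y * (K + Lp (sigma0^-1 * f y)))%R.
  have mH : measurable_fun setT H.
    apply: measurable_funM; [apply: measurable_funM => //|apply: measurable_funD => //].
    apply: measurableT_comp => //; exact: measurable_funM.
  have H0 : forall y, (0 <= H y)%R.
    move=> y; apply: mulr_ge0; [exact: mulr_ge0|exact: addr_ge0].
  have mHE : measurable_fun [set: R] (fun y => (H y)%:E) by apply/measurable_EFinP.
  have H0E : forall y, 0 <= (fun y => (H y)%:E) y by move=> y; rewrite lee_fin.
  have A := @aff_int R sigma0 (mu k) (fun y => (H y)%:E) s0 mHE H0E.
  rewrite (_ : \int[lebesgue_measure]_x (B k x)%:E = sigma0%:E * \int[lebesgue_measure]_y (H y)%:E); last first.
    by rewrite -A; apply: eq_integral => x _.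
  apply: lte_mul_pinfty; [by rewrite lee_fin ltW|by []|].
  pose a := (sigma0^-1)%R.
  pose b := (sigma0^-1 * (K + Num.max 0%R (ln sigma0)))%R.
  have b0 : (0 <= b)%R by apply: mulr_ge0 => //; apply: addr_ge0 => //; rewrite le_max lexx.
  have FL0 : forall y, (0 <= f y * Lp (f y))%R by move=> y; exact: mulr_ge0.
  have mFL : measurable_fun setT (fun y => f y * Lp (f y))%R.
    by apply: measurable_funM => //; exact: measurableT_comp.
  apply: (@le_lt_trans _ _ (\int[lebesgue_measure]_y ((a * (f y * Lp (f y)) + b * f y)%R)%:E)).
    apply: ge0_le_integral => //.
    - apply/measurable_EFinP; apply: measurable_funD; exact: measurable_funM.
    - by move=> y _; rewrite lee_fin; exact: Hbound.
  rewrite (eq_integral (fun y : measurableTypeR R => a%:E * (f y * Lp (f y))%:E + b%:E * (f y)%:E)); last first.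
    by move=> y _; rewrite EFinD !EFinM.
  rewrite ge0_integralD //.
  rewrite ge0_integralZl //; last by move=> y _; rewrite lee_fin.
  rewrite ge0_integralZl //; last by move=> y _; rewrite lee_fin.
  rewrite f1 mule1; apply: lte_add_pinfty; last by apply: ltry.
  apply: lte_mul_pinfty => //; by rewrite lee_fin.
  all: try by apply/measurable_EFinP.
  all: try by move=> y _; rewrite -EFinM lee_fin; apply: mulr_ge0.
  all: try by apply/measurable_EFinP; apply: measurable_funM.
have G0 : forall x, (0 <= gmix f alpha mu sigma0 x)%R.
  move=> x; apply: sumr_ge0 => k _; exact: mulr_ge0.
have mG : measurable_fun setT (gmix f alpha mu sigma0).
  apply: measurable_sum => j; exact: measurable_funM.
rewrite (eq_integral (fun x : measurableTypeR R => (`|ln (gmix f alpha mu sigma0 x)| * gmix f alpha mu sigma0 x)%:E)); last first.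
  move=> x _; rewrite /elog; have [Gp|Gn] := ltP 0%R (gmix f alpha mu sigma0 x).
    by rewrite abse_EFin -EFinM.
  have -> : gmix f alpha mu sigma0 x = 0%R by apply: le_anti; rewrite Gn G0.
  by rewrite mule0 mulr0.
apply: (@le_lt_trans _ _ (\int[lebesgue_measure]_x (\sum_(k < m) alpha k * B k x)%:E)).
  apply: ge0_le_integral => //.
  - move=> x _; rewrite lee_fin; exact: mulr_ge0.
  - apply/measurable_EFinP; apply: measurable_funM => //.
    apply: measurableT_comp => //; exact: measurableT_comp.
  - apply/measurable_EFinP; apply: measurable_sum => k; apply: measurable_funM => //; exact: mB.
  - move=> x _; rewrite lee_fin; have H := @pw R m alpha (fun k => fls f (mu k) sigma0 x) V a0 a1 (fun k => fk0 k x) (fun k => fkV k x).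
    rewrite /gmix /B /Lp /c /d; exact: H.
rewrite (eq_integral (fun x : measurableTypeR R => (\sum_(k < m) (alpha k)%:E * (B k x)%:E)%E)); last first.
  by move=> x _; rewrite -sumEFin; apply: eq_bigr => k _; rewrite EFinM.
rewrite ge0_integral_sum //; last first.
- by move=> k x _; rewrite -EFinM lee_fin; exact: mulr_ge0.
- move=> k; apply/measurable_EFinP; apply: measurable_funM => //; exact: mB.
apply: lte_sum_pinfty => k _.
rewrite ge0_integralZl //.
- apply: lte_mul_pinfty; [by rewrite lee_fin|by []|exact: IB].
- by apply/measurable_EFinP; exact: mB.
- by move=> x _; rewrite lee_fin.
- by rewrite lee_fin.
Qed.
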